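(* Let $P$ be a finite poset. If $\mathcal{J}$ is a poset ideal in $\mathrm{Hom}(P,\mathbb{N})$, then $\overline{\Lambda}\mathcal{J}=\{\overline{\Lambda}\phi:\phi\in\mathcal{J}\}$ is a poset ideal in $\mathbb{N}P$, i.e. every monomial dividing a monomial in $\overline{\Lambda}\mathcal{J}$ lies in $\overline{\Lambda}\mathcal{J}$.
   Context: $\mathbb{N}=\{0,1,\dots\}$; $\mathrm{Hom}(P,\mathbb{N})$ is the set of isotone maps $P\to\mathbb{N}$ ordered pointwise; a poset ideal is a down-closed subset. $\mathbb{N}P$ is the monoid of formal sums $\sum_{p\in P}n_pp$, $n_p\in\mathbb{N}$, ordered componentwise, identified with the monomials of $k[x_P]$ ($k$ a field) ordered by divisibility. The ascent is $\Lambda\phi=\{(p,i):\phi(q)\le i<\phi(p)\ \forall q<p\}$ and $\overline{\Lambda}\phi=\sum_{(p,i)\in\Lambda\phi}p\in\mathbb{N}P$, i.e. the monomial $\prod_{(p,i)\in\Lambda\phi}x_p$. *)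

(* Defs.v *)
From mathcomp Require Import all_boot all_order.
Set Implicit Arguments. Unset Strict Implicit. Unset Printing Implicit Defensive.
Import Order.TTheory.
Local Open Scope order_scope.

Definition isotone {d} {P : finPOrderType d} (phi : {ffun P -> nat}) : Prop :=
  forall p q : P, p <= q -> (phi p <= phi q)%N.

(* Elements of N P (monomials of k[x_P]) are functions P -> nat
   (coefficient vectors), ordered componentwise (= divisibility). *)
Definition leNP {d} {P : finPOrderType d} (m n : {ffun P -> nat}) : Prop :=
  forall p, (m p <= n p)%N.

Definition in_ascent {d} {P : finPOrderType d} (phi : {ffun P -> nat})
  (p : P) (i : nat) : bool :=
  (i < phi p)%N && [forall q : P, (q < p) ==> (phi q <= i)%N].

(* Lambda-bar phi = sum_{(p,i) in Lambda phi} p : the coefficient of p is the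
   number of i with (p,i) in Lambda phi (all such i are < phi p). *)
Definition ascent_bar {d} {P : finPOrderType d} (phi : {ffun P -> nat})
  : {ffun P -> nat} :=
  [ffun p => #|[pred i : 'I_(phi p) | in_ascent phi p i]|].

Definition hom_ideal {d} {P : finPOrderType d} (J : {ffun P -> nat} -> Prop)
  : Prop :=
  (forall phi, J phi -> isotone phi) /\
  (forall phi psi, J phi -> isotone psi -> leNP psi phi -> J psi).

(* Main.v *)
Require Import Defs.
From mathcomp Require Import all_boot all_order.
From mathcomp Require Import zify.
Import Order.TTheory.
Set Implicit Arguments.

Section Aux.
Variables (d : Order.disp_t) (P : finPOrderType d).

Definition Mx (f : {ffun P -> nat}) (p : P) : nat := \max_(q | (q < p)%O) f q.

Lemma Mx_le (f : {ffun P -> nat}) p i : [forall q : P, (q < p)%O ==> (f q <= i)] = (Mx f p <= i).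
Proof.
apply/forallP/bigmax_leqP => H q.
  by move=> Hq; have := H q; rewrite Hq.
by apply/implyP => Hq; apply: H.
Qed.

Lemma card_ge n a : #|[pred i : 'I_n | a <= i]| = n - a.
Proof.
rewrite -sum1_card big_mkcond /=.
rewrite -(big_mkord xpredT (fun i => if a <= i then 1 else 0)).
elim: n => [|n IH]; first by rewrite big_geq.
rewrite big_nat_recr //= IH; case: leqP => H; lia.
Qed.

Lemma ascent_barE (f : {ffun P -> nat}) p : ascent_bar f p = f p - Mx f p.
Proof.
rewrite ffunE -card_ge; apply: eq_card => i /=.
rewrite !inE /in_ascent Mx_le. by case: (i) => /= k ->.
Qed.

Lemma Mx_mono (f g : {ffun P -> nat}) p : (forall q, f q <= g q) -> Mx f p <= Mx g p.
Proof.
move=> H; apply/bigmax_leqP => q Hq.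
by apply: leq_trans (H q) _; apply: leq_bigmax_cond.
Qed.

Lemma Mx_isotone (f : {ffun P -> nat}) p : isotone f -> Mx f p <= f p.
Proof.
by move=> H; apply/bigmax_leqP => q Hq; apply: H; apply: ltW.
Qed.

End Aux.

Theorem proposition3p4 (d : Order.disp_t) (P : finPOrderType d)
  (J : {ffun P -> nat} -> Prop) :
  hom_ideal J ->
  forall (m : {ffun P -> nat}) (phi : {ffun P -> nat}),
    J phi -> leNP m (ascent_bar phi) ->
    exists2 psi : {ffun P -> nat}, J psi & ascent_bar psi = m.
Proof.
move=> [Jiso Jdown] m phi Jphi Hm.
have iphi := Jiso _ Jphi.
pose F (f : {ffun P -> nat}) : {ffun P -> nat} := [ffun p => m p + Mx f p].
pose s k := iter k F [ffun => 0].
have Fmono (f g : {ffun P -> nat}) : (forall q, f q <= g q) -> forall q, F f q <= F g q.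
  by move=> H q; rewrite !ffunE leq_add2l; apply: (@Mx_mono _ _ f g q H).
have Fbnd (f : {ffun P -> nat}) : (forall q, f q <= phi q) -> forall q, F f q <= phi q.
  move=> H q; rewrite ffunE.
  have := Hm q; rewrite ascent_barE => Hq.
  have := @Mx_mono _ _ f phi q H; have := @Mx_isotone _ _ phi q iphi; lia.
have sinc k q : s k q <= s k.+1 q.
  elim: k q => [|k IH] q; first by rewrite /s /= ffunE.
  by apply: Fmono.
have sbnd k q : s k q <= phi q.
  elim: k q => [|k IH] q; first by rewrite /s /= ffunE.
  by apply: Fbnd.
have key k : (exists j, s j = s j.+1) \/ k <= \sum_q s k q.
  elim: k => [|k [IH|IH]]; [by right| by left|].
  case: (boolP (s k == s k.+1)) => [/eqP E|NE]; first by left; exists k.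
  right.
  have [p Hp] : exists p, s k p != s k.+1 p.
    apply/existsP; move: NE; apply: contraR; rewrite negb_exists => /forallP H.
    by apply/eqP/ffunP => p; have := H p; rewrite negbK => /eqP.
  have sumlt (f g : {ffun P -> nat}) : (forall q, f q <= g q) -> f p != g p ->
      \sum_q f q < \sum_q g q.
    move=> Hfg Hne; rewrite (bigD1 p) //= [X in _ < X](bigD1 p) //=.
    have : \sum_(i | i != p) f i <= \sum_(i | i != p) g i.
      by apply: leq_sum => i _; apply: Hfg.
    have := Hfg p; move: Hne; rewrite neq_ltn => /orP [Hlt|Hlt] Hle Hs; first (rewrite -addSn; exact: leq_add). by move: Hle; rewrite leqNgt Hlt.
  exact: (leq_ltn_trans IH (sumlt _ _ (sinc k) Hp)).
have [[j Ej]|C] := key (\sum_q phi q).+1; last first.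
  have : \sum_q s (\sum_q phi q).+1 q <= \sum_q phi q.
    by apply: leq_sum => q _; apply: sbnd.
  lia.
pose psi := s j.
have Fix : forall p, psi p = m p + Mx psi p.
  by move=> p; rewrite {1}/psi Ej /= ffunE.
have ipsi : isotone psi.
  move=> p q; rewrite le_eqVlt => /orP [/eqP->//|Hpq].
  rewrite (Fix q); apply: leq_trans (leq_addl _ _).
  exact: leq_bigmax_cond.
exists psi.
  by apply: Jdown Jphi ipsi _ => q; apply: sbnd.
by apply/ffunP => p; rewrite ascent_barE {1}Fix addnK.
Qed.
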